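(* Let $H$ be a separable real Hilbert space with complete orthonormal system $(e_k)_{k\ge1}$, $F\subset H$ compact, $\mu$ a probability measure on $F$, and $d,n\in\mathbb{N}$ with $\mathbf{M}_{d,n}(\mu)$ nonsingular. Then for every $h\in H$ and $\delta>0$ such that $\min_{f\in F}|\pi_n(f-h)|\ge\delta$, \[p^\mu_{d,n}(h)\ \ge\ 2^{\frac{\delta}{\delta+\operatorname{diam}F}\,d-3},\] where $\operatorname{diam}F=\max_{f_1,f_2\in F}|f_1-f_2|$.
   Context: $|\cdot|$ is the norm of $H$ and $\pi_n(f)=\sum_{k=1}^n\langle f,e_k\rangle e_k$. $c_0(\mathbb{N})$ is the set of sequences of nonnegative integers with finitely many nonzero entries; for $a\in c_0(\mathbb{N})$, $f^a:=\prod_k\langle f,e_k\rangle^{a_k}$. A polynomial on $H$ is a finite linear combination $p(f)=\sum_a p_a f^a$; its algebraic degree is $\max\{\sum_k a_k: p_a\neq0\}$ and its harmonic degree is $\max\{k: a_k\neq0\text{ for some } a\text{ with } p_a\neq0\}$. $P_{d,n}$ is the space of polynomials of algebraic degree at most $d$ and harmonic degree at most $n$. $\boldsymbol{v}_{d,n}(\cdot)$ is a vector whose entries form a basis of $P_{d,n}$; $\mathbf{M}_{d,n}(\mu)=\int_F \boldsymbol{v}_{d,n}(f)\boldsymbol{v}_{d,n}(f)^T\,d\mu(f)$; the Christoffel–Darboux polynomial is $p^\mu_{d,n}(f)=\boldsymbol{v}_{d,n}(f)^T\mathbf{M}_{d,n}(\mu)^{-1}\boldsymbol{v}_{d,n}(f)$.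 *)

(* Defs.v *)
From HB Require Import structures.
From mathcomp Require Import all_boot all_order all_algebra.
From mathcomp Require Import all_classical all_reals all_analysis.
Set Implicit Arguments. Unset Strict Implicit. Unset Printing Implicit Defensive.
Import Order.TTheory GRing.Theory Num.Theory.
Import numFieldNormedType.Exports.
Local Open Scope classical_set_scope.
Local Open Scope ring_scope.

Section Defs.
Variables (R : realType) (H : normedModType R).

Definition inner_product_of_norm (inner : H -> H -> R) : Prop :=
  [/\ (forall x y, inner x y = inner y x),
      (forall (a : R) x y z, inner (a *: x + y) z = a * inner x z + inner y z) &
      (forall x, inner x x = `|x| ^+ 2)].

(* (e k)_{k : nat} is a complete orthonormal system.  NB: indexed from 0,
   i.e. e k here is e_{k+1} of the paper. *)
Definition complete_orthonormal_system (inner : H -> H -> R) (e : nat -> H) : Prop :=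
  (forall i j, inner (e i) (e j) = (i == j)%:R) /\
  (forall f, (forall k, inner f (e k) = 0) -> f = 0).

Definition proj_n (inner : H -> H -> R) (e : nat -> H) (n : nat) (f : H) : H :=
  \sum_(k < n) inner f (e k) *: e k.

(* diam F = max_{f1,f2 in F} |f1 - f2| (a max when F is compact nonempty) *)
Definition diam (F : set H) : R :=
  sup [set `|f1 - f2| | f1 in F & f2 in F].

Definition borelH := g_sigma_algebraType (@open H).

End Defs.

(* multi-indices a with support in {1..n} and |a| <= d : these index the
   monomial basis of P_{d,n} *)
Definition multi_index (d n : nat) :=
  {a : {ffun 'I_n -> 'I_d.+1} | (\sum_(i < n) (a i : nat) <= d)%N}.

Section Poly.
Variables (R : realType) (H : normedModType R).
Variables (inner : H -> H -> R) (e : nat -> H) (d n : nat).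

Definition monomial (a : multi_index d n) (f : H) : R :=
  \prod_(i < n) inner f (e i) ^+ (val a i : nat).

Definition Nbasis := #|{: multi_index d n}|.

Definition vdn (f : H) : 'cV[R]_Nbasis :=
  \col_(i < Nbasis) monomial (enum_val i) f.

Definition moment_matrix (mu : {measure set (borelH H) -> \bar R}) (F : set H) : 'M[R]_Nbasis :=
  \matrix_(i < Nbasis, j < Nbasis)
     Rintegral mu (F : set (borelH H)) (fun f : borelH H => vdn f i 0 * vdn f j 0).

Definition christoffel_darboux (mu : {measure set (borelH H) -> \bar R}) (F : set H) (h : H) : R :=
  ((vdn h)^T *m invmx (moment_matrix mu F) *m vdn h) 0 0.

End Poly.

(* Main.v *)
Require Import Defs.
From HB Require Import structures.
From mathcomp Require Import all_boot all_order all_algebra.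
From mathcomp Require Import all_classical all_reals all_analysis.
From mathcomp Require Import ring lra zify.
From mathcomp Require Import measurable_realfun.
Import Order.TTheory GRing.Theory Num.Theory.
Import numFieldNormedType.Exports.
Local Open Scope classical_set_scope.
Local Open Scope ring_scope.
Set Implicit Arguments. Unset Strict Implicit. Unset Printing Implicit Defensive.
Section Inner.
Variables (R : realType) (H : normedModType R) (inner : H -> H -> R).
Hypothesis hip : inner_product_of_norm inner.

Lemma innerC x y : inner x y = inner y x.
Proof. by case: hip. Qed.
Lemma innerDZl a x y z : inner (a *: x + y) z = a * inner x z + inner y z.
Proof. by case: hip. Qed.
Lemma innerxx x : inner x x = `|x| ^+ 2.
Proof. by case: hip. Qed.
Lemma innerDl x y z : inner (x + y) z = inner x z + inner y z.
Proof. by rewrite -[x]scale1r innerDZl mul1r scale1r. Qed.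
Lemma inner0l z : inner 0 z = 0.
Proof. have := innerDl 0 0 z; rewrite addr0; lra. Qed.
Lemma innerZl a x z : inner (a *: x) z = a * inner x z.
Proof. by have := innerDZl a x 0 z; rewrite addr0 inner0l addr0. Qed.
Lemma innerNl x z : inner (- x) z = - inner x z.
Proof. by rewrite -scaleN1r innerZl mulN1r. Qed.
Lemma innerBl x y z : inner (x - y) z = inner x z - inner y z.
Proof. by rewrite innerDl innerNl. Qed.
Lemma innerDr x y z : inner z (x + y) = inner z x + inner z y.
Proof. by rewrite innerC innerDl !(innerC z). Qed.
Lemma innerBr x y z : inner z (x - y) = inner z x - inner z y.
Proof. by rewrite innerC innerBl !(innerC z). Qed.
Lemma innerNr x z : inner z (- x) = - inner z x.
Proof. by rewrite innerC innerNl innerC. Qed.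
Lemma inner_suml (I : Type) (s : seq I) (a : I -> R) (x : I -> H) y :
  inner (\sum_(i <- s) a i *: x i) y = \sum_(i <- s) a i * inner (x i) y.
Proof.
elim: s => [|i s IH]; first by rewrite !big_nil inner0l.
by rewrite !big_cons innerDl innerZl IH.
Qed.

Lemma polar x y : inner x y = (`|x + y| ^+ 2 - `|x - y| ^+ 2) / 4.
Proof.
rewrite -!innerxx !innerDl !innerNl !innerDr !innerNr (innerC y x).
by field.
Qed.

Lemma inner_cont y : continuous (fun x => inner x y).
Proof.
pose f1 := (fun x => `|x + y|) \* (fun x => `|x + y|).
pose f2 := (fun x => `|x - y|) \* (fun x => `|x - y|).
have -> : (fun x => inner x y) = (f1 - f2) \* cst (4^-1 : R).
  by apply: funext => x; rewrite polar /f1 /f2 /= !expr2.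
have c1 : continuous (fun x : H => x + y).
  by move=> x; apply: continuousD; [exact: cvg_id | exact: cst_continuous].
have c2 : continuous (fun x : H => x - y).
  by move=> x; apply: continuousB; [exact: cvg_id | exact: cst_continuous].
move=> x; apply: continuousM; last exact: cst_continuous.
apply: continuousB; apply: continuousM;
  apply: continuous_comp; (exact: c1 || exact: c2 || exact: norm_continuous).
Qed.
End Inner.
Section Proj.
Variables (R : realType) (H : normedModType R) (inner : H -> H -> R) (e : nat -> H).
Hypothesis hip : inner_product_of_norm inner.
Hypothesis he : forall i j, inner (e i) (e j) = (i == j)%:R.
Variable n : nat.
Local Notation P := (proj_n inner e n).

Lemma proj_inner x (j : 'I_n) : inner (P x) (e j) = inner x (e j).
Proof.
rewrite /proj_n (inner_suml hip) (bigD1 j) //= he eqxx mulr1 big1 ?addr0 //.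
by move=> k kj; rewrite he; have /negPf -> : (k:nat) != j by []; rewrite mulr0.
Qed.

Lemma proj_normsq x : `|P x| ^+ 2 = \sum_(k < n) inner x (e k) ^+ 2.
Proof.
rewrite -(innerxx hip) {1}/proj_n (inner_suml hip); apply: eq_bigr => k _.
by rewrite (innerC hip (e k)) proj_inner expr2.
Qed.

Lemma inner_proj x : inner x (P x) = \sum_(k < n) inner x (e k) ^+ 2.
Proof.
rewrite (innerC hip) /proj_n (inner_suml hip); apply: eq_bigr => k _.
by rewrite (innerC hip) expr2.
Qed.

Lemma bessel x : \sum_(k < n) inner x (e k) ^+ 2 <= `|x| ^+ 2.
Proof.
have h : 0 <= `|x - P x| ^+ 2 by rewrite exprn_ge0.
move: h; rewrite -(innerxx hip).
rewrite (innerBl hip) !(innerBr hip) (innerC hip (P x) x) inner_proj (innerxx hip) (innerxx hip (P x)) proj_normsq.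
lra.
Qed.

Lemma proj_le x : `|P x| <= `|x|.
Proof.
rewrite -ler_sqr ?nnegrE //= proj_normsq; exact: bessel.
Qed.

Lemma projB x y : P (x - y) = P x - P y.
Proof.
rewrite /proj_n -sumrB; apply: eq_bigr => k _; by rewrite (innerBl hip) scalerBl.
Qed.
End Proj.
Section Span.
Variables (R : realType) (H : normedModType R) (inner : H -> H -> R) (e : nat -> H) (d n : nat).
Local Notation MI := (multi_index d n).
Local Notation mono := (monomial inner e (d:=d) (n:=n)).

Definition deg (a : MI) : nat := \sum_(i < n) (val a i : nat).

Lemma term_le_sum (g : 'I_n -> nat) i : (g i <= \sum_(j < n) g j)%N.
Proof. by rewrite (bigD1 i) //= leq_addr. Qed.

Lemma mk_proof (g : 'I_n -> nat) : (\sum_(i < n) g i <= d)%N ->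
  (\sum_(i < n) (([ffun i => inord (g i)] : {ffun 'I_n -> 'I_d.+1}) i : nat) <= d)%N.
Proof.
move=> Hg; rewrite (eq_bigr g) // => i _; rewrite ffunE inordK //.
by rewrite ltnS (leq_trans (term_le_sum g i)).
Qed.

Definition mk (g : 'I_n -> nat) (Hg : (\sum_(i < n) g i <= d)%N) : MI :=
  exist _ [ffun i => inord (g i)] (mk_proof Hg).

Lemma mkE g Hg i : (val (@mk g Hg) i : nat) = g i.
Proof.
rewrite /= ffunE inordK // ltnS (leq_trans (term_le_sum g i)) //.
Qed.

Lemma deg_mk g Hg : deg (@mk g Hg) = \sum_(i < n) g i.
Proof. by apply: eq_bigr => i _; rewrite mkE. Qed.

Lemma mono_mk g Hg f : mono (@mk g Hg) f = \prod_(i < n) inner f (e i) ^+ g i.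
Proof. by apply: eq_bigr => i _; rewrite mkE. Qed.

Definition inspan (k : nat) (q : H -> R) := exists c : MI -> R,
  (forall a, c a != 0 -> (deg a <= k)%N) /\ forall f, q f = \sum_a c a * mono a f.

Lemma inspan_ext k q q' : inspan k q -> (forall f, q f = q' f) -> inspan k q'.
Proof. by move=> [c [h1 h2]] hq; exists c; split => // f; rewrite -hq. Qed.

Lemma inspan_le k k' q : (k <= k')%N -> inspan k q -> inspan k' q.
Proof.
move=> kk [c [h1 h2]]; exists c; split => // a /h1 h; exact: leq_trans h kk.
Qed.

Lemma inspan0 k : inspan k (fun _ => 0).
Proof. by exists (fun _ => 0); split => [a|f]; rewrite ?eqxx // big1 // => a _; rewrite mul0r. Qed.

Lemma inspanD k q r : inspan k q -> inspan k r -> inspan k (fun f => q f + r f).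
Proof.
move=> [c [h1 h2]] [c' [h1' h2']]; exists (fun a => c a + c' a); split.
  move=> a; have [/h1 //|] := boolP (c a != 0).
  by rewrite negbK => /eqP ->; rewrite add0r => /h1'.
by move=> f; rewrite h2 h2' -big_split; apply: eq_bigr => a _; rewrite mulrDl.
Qed.

Lemma inspanZ k r q : inspan k q -> inspan k (fun f => r * q f).
Proof.
move=> [c [h1 h2]]; exists (fun a => r * c a); split.
  by move=> a; rewrite mulf_eq0 negb_or => /andP[_ /h1].
by move=> f; rewrite h2 mulr_sumr; apply: eq_bigr => a _; rewrite mulrA.
Qed.

Lemma inspan_sum k (I : Type) (s : seq I) (F : I -> H -> R) :
  (forall i, inspan k (F i)) -> inspan k (fun f => \sum_(i <- s) F i f).
Proof.
move=> hF; elim: s => [|i s IH].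
  by apply: inspan_ext (inspan0 k) _ => f; rewrite big_nil.
by apply: inspan_ext (inspanD (hF i) IH) _ => f; rewrite big_cons.
Qed.

Lemma inspan_mono a : inspan (deg a) (mono a).
Proof.
exists (fun b => (b == a)%:R); split.
  by move=> b; case: (b =P a) => [->//|_]; rewrite eqxx.
move=> f; rewrite (bigD1 a) //= eqxx mul1r big1 ?addr0 // => b /negPf ->.
by rewrite mul0r.
Qed.

Lemma mono_mul a b : (deg a + deg b <= d)%N ->
  exists ab, deg ab = (deg a + deg b)%N /\ forall f, mono a f * mono b f = mono ab f.
Proof.
move=> hab.
have Hg : (\sum_(i < n) ((val a i : nat) + val b i) <= d)%N by rewrite big_split.
exists (mk Hg); split; first by rewrite deg_mk big_split.
move=> f; rewrite mono_mk -big_split; apply: eq_bigr => i _; by rewrite exprD.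
Qed.

Lemma inspanM k l q r : (k + l <= d)%N -> inspan k q -> inspan l r ->
  inspan (k + l) (fun f => q f * r f).
Proof.
move=> kl [c [h1 h2]] [c' [h1' h2']].
apply: inspan_ext (_ : inspan (k + l) (fun f => \sum_a \sum_b (c a * c' b) * (mono a f * mono b f))) _.
  apply: inspan_sum => a; apply: inspan_sum => b.
  have [/h1 ha|] := boolP (c a != 0); last first.
    by rewrite negbK => /eqP ->; apply: inspan_ext (inspan0 _) _ => f; rewrite !mul0r.
  have [/h1' hb|] := boolP (c' b != 0); last first.
    by rewrite negbK => /eqP ->; apply: inspan_ext (inspan0 _) _ => f; rewrite mulr0 mul0r.
  have [ab [dab hab]] : exists ab, deg ab = (deg a + deg b)%N /\ forall f, mono a f * mono b f = mono ab f.
    by apply: mono_mul; apply: leq_trans kl; exact: leq_add.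
  apply: inspanZ; apply: inspan_ext (_ : inspan (k + l) (mono ab)) _ => //.
  by apply: inspan_le (inspan_mono ab); rewrite dab; exact: leq_add.
move=> f; rewrite h2 h2' mulr_suml; apply: eq_bigr => a _.
rewrite mulr_sumr; apply: eq_bigr => b _; ring.
Qed.

Lemma inspan_cst r : inspan 0 (fun _ => r).
Proof.
have Hg : (\sum_(i < n) (fun _ => 0%N) i <= d)%N by rewrite big1.
have dg : deg (mk Hg) = 0%N by rewrite deg_mk big1.
have := inspanZ r (inspan_mono (mk Hg)); rewrite dg => h; apply: inspan_ext h _ => f.
by rewrite mono_mk big1 ?mulr1 // => i _; rewrite expr0.
Qed.

Lemma inspan_coord (i : 'I_n) : (1 <= d)%N -> inspan 1 (fun f => inner f (e i)).
Proof.
move=> d1.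
have Hg : (\sum_(j < n) (fun j : 'I_n => (j == i) : nat) j <= d)%N.
  by rewrite (bigD1 i) //= eqxx big1 // => j /negPf ->.
have dg : deg (mk Hg) = 1%N by rewrite deg_mk (bigD1 i) //= eqxx big1 // => j /negPf ->.
apply: inspan_ext (_ : inspan 1 (mono (mk Hg))) _; first by rewrite -{1}dg; exact: inspan_mono.
move=> f; rewrite mono_mk (bigD1 i) //= eqxx expr1 big1 ?mulr1 // => j /negPf ->.
by rewrite expr0.
Qed.
End Span.
Section Cheb.
Variable R : realType.

Fixpoint chebT (k : nat) (x : R) : R :=
  match k with 0 => 1 | 1 => x | (k'.+1 as k1).+1 => 2 * x * chebT k1 x - chebT k' x end.
Fixpoint chebU (k : nat) (x : R) : R :=
  match k with 0 => 0 | 1 => 1 | (k'.+1 as k1).+1 => 2 * x * chebU k1 x - chebU k' x end.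

Lemma chebT_SS k x : chebT k.+2 x = 2 * x * chebT k.+1 x - chebT k x.
Proof. by []. Qed.
Lemma chebU_SS k x : chebU k.+2 x = 2 * x * chebU k.+1 x - chebU k x.
Proof. by []. Qed.

Lemma pell3 k x :
  [/\ chebT k x ^+ 2 - (x ^+ 2 - 1) * chebU k x ^+ 2 = 1,
      chebT k x * chebT k.+1 x - (x ^+ 2 - 1) * chebU k x * chebU k.+1 x = x &
      chebT k.+1 x ^+ 2 - (x ^+ 2 - 1) * chebU k.+1 x ^+ 2 = 1].
Proof.
elim: k => [|k [h1 h2 h3]]; first by split => /=; ring.
split => //.
  rewrite chebT_SS chebU_SS.
  have -> : chebT k.+1 x * (2 * x * chebT k.+1 x - chebT k x) -
    (x ^+ 2 - 1) * chebU k.+1 x * (2 * x * chebU k.+1 x - chebU k x) =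
    2 * x * (chebT k.+1 x ^+ 2 - (x ^+ 2 - 1) * chebU k.+1 x ^+ 2)
    - (chebT k x * chebT k.+1 x - (x ^+ 2 - 1) * chebU k x * chebU k.+1 x) by ring.
  rewrite h3 h2; ring.
rewrite chebT_SS chebU_SS.
have -> : (2 * x * chebT k.+1 x - chebT k x) ^+ 2 -
    (x ^+ 2 - 1) * (2 * x * chebU k.+1 x - chebU k x) ^+ 2 =
    4 * x ^+ 2 * (chebT k.+1 x ^+ 2 - (x ^+ 2 - 1) * chebU k.+1 x ^+ 2)
    - 4 * x * (chebT k x * chebT k.+1 x - (x ^+ 2 - 1) * chebU k x * chebU k.+1 x)
    + (chebT k x ^+ 2 - (x ^+ 2 - 1) * chebU k x ^+ 2) by ring.
rewrite h1 h2 h3; ring.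
Qed.

Lemma chebT_bound k x : -1 <= x <= 1 -> chebT k x ^+ 2 <= 1.
Proof.
move=> /andP[h1 h2]; have [p _ _] := pell3 k x.
have : 0 <= chebU k x ^+ 2 by rewrite sqr_ge0.
have : x ^+ 2 <= 1 by nra.
nra.
Qed.

Lemma chebT_closed (r s : R) : r * s = 1 -> forall k,
  chebT k ((r + s) / 2) = (r ^+ k + s ^+ k) / 2.
Proof.
move=> rs.
suff H k : chebT k ((r + s) / 2) = (r ^+ k + s ^+ k) / 2 /\
   chebT k.+1 ((r + s) / 2) = (r ^+ k.+1 + s ^+ k.+1) / 2 by move=> k; case: (H k).
elim: k => [|k [h1 h2]]; first by split => /=; rewrite ?expr0 ?expr1 //; lra.
split => //; rewrite chebT_SS h1 h2 !exprS.
have -> : r * (r * r ^+ k) + s * (s * s ^+ k) =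
  (r + s) * (r * r ^+ k + s * s ^+ k) - (r * s) * (r ^+ k + s ^+ k) by ring.
rewrite rs mul1r; lra.
Qed.
End Cheb.
Lemma inspan_cheb (R : realType) (H : normedModType R) (inner : H -> H -> R) (e : nat -> H) (d n : nat)
  (phi : H -> R) : inspan inner e d n 2 phi ->
  forall j, (2 * j <= d)%N -> inspan inner e d n (2 * j) (fun f => chebT j (phi f)).
Proof.
move=> hphi.
suff S j : ((2 * j <= d)%N -> inspan inner e d n (2 * j) (fun f => chebT j (phi f))) /\
   ((2 * j.+1 <= d)%N -> inspan inner e d n (2 * j.+1) (fun f => chebT j.+1 (phi f))).
  by move=> j; case: (S j).
elim: j => [|j [IH0 IH]].
  split=> _; first exact: inspan_cst.
  by apply: inspan_ext hphi _.
split=> // hd.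
have h1 : (2 * j.+1 <= d)%N by lia.
have h0 : (2 * j <= d)%N by lia.
have hm : inspan inner e d n (2 * j.+2) (fun f => (2 * phi f) * chebT j.+1 (phi f)).
  have -> : (2 * j.+2 = 2 + 2 * j.+1)%N by lia.
  apply: inspanM; first by lia.
    exact: inspanZ.
  exact: IH.
have ht : inspan inner e d n (2 * j.+2) (fun f => -1 * chebT j (phi f)).
  by apply: inspanZ; apply: inspan_le (IH0 h0); lia.
apply: inspan_ext (inspanD hm ht) _ => f.
by rewrite chebT_SS mulN1r.
Qed.
Section Meas.
Variables (R : realType) (H : normedModType R).

Lemma open_measH (A : set H) : open A -> measurable (A : set (borelH H)).
Proof. by move=> oA; apply: sub_sigma_algebra. Qed.

Lemma cont_measH (D : set (borelH H)) (f : H -> R) :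
  measurable D -> continuous f -> measurable_fun D (f : borelH H -> R).
Proof.
move=> mD /continuousP cf; apply: (measurability _ (RGenOpens.measurableE R)).
move=> _ [_ [a [b ->] <-]]; apply: measurableI => //.
by apply: open_measH; apply: cf; exact: interval_open.
Qed.

Lemma bounded_int (mu : {measure set (borelH H) -> \bar R}) (D : set (borelH H)) (f : H -> R) :
  measurable D -> (mu D < +oo)%E -> measurable_fun D (f : borelH H -> R) ->
  (exists B, forall x, D x -> `|f x| <= B) -> mu.-integrable D (EFin \o (f : borelH H -> R)).
Proof.
move=> mD Dfin mf [B hB]; apply/integrableP; split; first exact/measurable_EFinP.
apply: le_lt_trans.
  apply: (integral_le_bound (`|B| + 1)%:E) => //.
  - exact: measurableT_comp.
  apply: aeW => z Dz; rewrite /= lee_fin.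
  by rewrite (le_trans (hB z Dz)) // (le_trans (ler_norm B)) // lerDl.
by rewrite lte_mul_pinfty // lee_fin addr_ge0.
Qed.

Lemma compact_boundR (F : set H) (f : H -> R) : compact F -> continuous f ->
  exists B, forall x, F x -> `|f x| <= B.
Proof.
move=> cF cf.
have := compact_bounded (continuous_compact (continuous_subspaceT cf) cF).
move=> [M [_ hM]]; exists (`|M| + 1) => x Fx.
have := hM (`|M| + 1); apply.
  by rewrite (le_lt_trans (ler_norm M)) // ltrDl.
by exists x.
Qed.

Lemma cont_prod (I : Type) (s : seq I) (G : I -> H -> R) :
  (forall i, continuous (G i)) -> continuous (fun f => \prod_(i <- s) G i f).
Proof.
move=> hG; elim: s => [|i s IH].
  have -> : (fun f => \prod_(i <- [::]) G i f) = (fun=> 1).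
    by apply: funext => f; rewrite big_nil.
  exact: cst_continuous.
have -> : (fun f => \prod_(j <- i :: s) G j f) = G i \* (fun f => \prod_(j <- s) G j f).
  by apply: funext => f; rewrite big_cons.
by move=> x; apply: continuousM; [exact: hG | exact: IH].
Qed.

Lemma cont_exp (g : H -> R) k : continuous g -> continuous (fun f => g f ^+ k).
Proof.
move=> cg; elim: k => [|k IH].
  have -> : (fun f => g f ^+ 0) = (fun=> 1) by apply: funext => f; rewrite expr0.
  exact: cst_continuous.
have -> : (fun f => g f ^+ k.+1) = g \* (fun f => g f ^+ k).
  by apply: funext => f; rewrite exprS.
by move=> x; apply: continuousM; [exact: cg | exact: IH].
Qed.
End Meas.
Lemma cs_quad (R : realType) (a b c : R) : 0 <= a ->
  (forall t, 0 <= c + 2 * t * b + t ^+ 2 * a) -> b ^+ 2 <= a * c.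
Proof.
move=> a0 h; have [a_gt0|] := ltP 0 a.
  have := h (- b / a).
  have -> : c + 2 * (- b / a) * b + (- b / a) ^+ 2 * a = c - b ^+ 2 / a.
    by field; rewrite gt_eqF.
  rewrite subr_ge0 ler_pdivrMr // => hb; by rewrite mulrC.
move=> a_le0; have a00 : a = 0 by apply/eqP; rewrite eq_le a_le0 a0.
rewrite a00 mul0r; have [b0|bn0] := eqVneq b 0; first by rewrite b0 expr0n.
have := h (- (c + 1) / (2 * b)).
rewrite a00 mulr0 addr0.
have -> : 2 * (- (c + 1) / (2 * b)) * b = - (c + 1) by field; rewrite bn0.
lra.
Qed.

Section Core.
Variables (R : realType) (H : normedModType R) (inner : H -> H -> R) (e : nat -> H).
Hypothesis hip : inner_product_of_norm inner.
Variables (d n : nat) (F : set H) (mu : probability (borelH H) R).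
Hypothesis cF : compact F.
Local Notation N := (Nbasis d n).
Local Notation v := (vdn inner e d n).
Local Notation Mx := (moment_matrix inner e d n mu F).

Lemma mF : measurable (F : set (borelH H)).
Proof.
have : closed F by apply: compact_closed => //; exact: norm_hausdorff.
move/closed_openC/open_measH/measurableC; by rewrite setCK.
Qed.

Lemma mono_cont a : continuous (monomial inner e (d:=d) (n:=n) a).
Proof.
apply: cont_prod => i; apply: cont_exp; exact: inner_cont.
Qed.

Lemma v_cont i : continuous (fun f => v f i 0).
Proof.
have -> : (fun f => v f i 0) = monomial inner e (enum_val i) by apply: funext => f; rewrite mxE.
exact: mono_cont.
Qed.

Lemma vv_int i j : mu.-integrable F (EFin \o (fun f => v f i 0 * v f j 0 : R)).
Proof.
have c : continuous (fun f => v f i 0 * v f j 0).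
  by move=> x; apply: continuousM; apply: v_cont.
apply: bounded_int mF _ _ _.
- by apply: (le_lt_trans (probability_le1 mu mF)); exact: ltry.
- by apply: cont_measH => //; exact: mF.
- exact: compact_boundR cF c.
Qed.

Lemma Rint_sum (I : Type) (s : seq I) (G : I -> H -> R) :
  (forall i, mu.-integrable F (EFin \o (G i : borelH H -> R))) ->
  mu.-integrable F (EFin \o (fun f : borelH H => \sum_(i <- s) G i f)) /\
  Rintegral mu F (fun f : borelH H => \sum_(i <- s) G i f) = \sum_(i <- s) Rintegral mu F (G i : borelH H -> R).
Proof.
move=> hG; elim: s => [|i s [IHi IHe]].
  have e0 : (fun f : borelH H => \sum_(i <- [::]) G i f) = (fun=> 0) by apply: funext => f; rewrite big_nil.
  rewrite e0 big_nil; split; last by rewrite Rintegral_cst ?mul0r //; exact: mF.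
  apply: bounded_int mF _ _ _.
  - by apply: (le_lt_trans (probability_le1 mu mF)); exact: ltry.
  - by apply: cont_measH; [exact: mF | exact: cst_continuous].
  - by exists 0 => x _; rewrite normr0.
have ec : (fun f : borelH H => \sum_(j <- i :: s) G j f) = (fun f => G i f + \sum_(j <- s) G j f).
  by apply: funext => f; rewrite big_cons.
rewrite ec big_cons; split.
  exact: (integrableD mF (hG i) IHi).
by rewrite RintegralD // -?IHe //; exact: mF.
Qed.

Lemma vZ_int (x y : 'cV[R]_N) i j : mu.-integrable F
  (EFin \o (fun f => (x i 0 * y j 0) * (v f i 0 * v f j 0) : R)).
Proof.
apply: eq_integrable (integrableZl mF (x i 0 * y j 0) (vv_int i j)); first exact: mF.
by move=> z _ /=; rewrite EFinM.
Qed.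

Definition B (x y : 'cV[R]_N) := (x^T *m Mx *m y) 0 0.
Definition lin (x : 'cV[R]_N) (f : H) := (x^T *m v f) 0 0.

Lemma lin_sum x f : lin x f = \sum_i x i 0 * v f i 0.
Proof. by rewrite /lin mxE; apply: eq_bigr => i _; rewrite mxE. Qed.

Lemma quad x y : mu.-integrable F (EFin \o (fun f => lin x f * lin y f : R)) /\
  B x y = Rintegral mu F (fun f => lin x f * lin y f).
Proof.
have ef : (fun f : borelH H => lin x f * lin y f) =
  (fun f => \sum_(j < N) \sum_(i < N) (x i 0 * y j 0) * (v f i 0 * v f j 0)).
  apply: funext => f; rewrite !lin_sum mulr_suml.
  rewrite exchange_big /=; apply: eq_bigr => j _; rewrite mulr_sumr.
  by apply: eq_bigr => i _; ring.
rewrite ef.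
have hi : forall j, mu.-integrable F (EFin \o (fun f : borelH H => \sum_(i < N) (x i 0 * y j 0) * (v f i 0 * v f j 0))).
  move=> j; have [] := @Rint_sum _ (index_enum _) (fun i f => (x i 0 * y j 0) * (v f i 0 * v f j 0))
     (fun i => vZ_int x y i j); done.
have [I1 E1] := @Rint_sum _ (index_enum _) _ hi.
split => //; rewrite E1 /B mxE; apply: eq_bigr => j _.
have [_ E2] := @Rint_sum _ (index_enum _) (fun i f => (x i 0 * y j 0) * (v f i 0 * v f j 0))
     (fun i => vZ_int x y i j).
rewrite E2 mxE mulr_suml; apply: eq_bigr => i _.
rewrite RintegralZl; last exact: vv_int.
  by rewrite !mxE; ring.
exact: mF.
Qed.

Lemma Mx_sym : Mx^T = Mx.
Proof.
apply/matrixP => i j; rewrite !mxE; apply: eq_Rintegral => f _; by rewrite mulrC.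
Qed.

Lemma B_sym x y : B x y = B y x.
Proof.
rewrite /B; have -> : (x^T *m Mx *m y) 0 0 = ((x^T *m Mx *m y)^T) 0 0 by rewrite [RHS]mxE.
by rewrite !trmx_mul trmxK Mx_sym mulmxA.
Qed.

Lemma B_expand x y t : B (x + t *: y) (x + t *: y) = B x x + 2 * t * B x y + t ^+ 2 * B y y.
Proof.
rewrite /B.
have -> : (x + t *: y)^T = x^T + t *: y^T by apply/matrixP => i j; rewrite !mxE.
rewrite !mulmxDl !mulmxDr -!scalemxAl -!scalemxAr.
have := B_sym y x; rewrite /B => hs.
move: hs; set A := x^T *m Mx *m x; set C := x^T *m Mx *m y; set D := y^T *m Mx *m x;
  set E := y^T *m Mx *m y => hs.
clearbody A C D E; rewrite !mxE hs; ring.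
Qed.

Lemma B_psd x : 0 <= B x x.
Proof.
have [_ ->] := quad x x; apply: Rintegral_ge0 => f _; exact: sqr_ge0.
Qed.

Lemma p_lower (q : H -> R) (h : H) : Mx \in unitmx -> inspan inner e d n d q ->
  (forall f, F f -> q f ^+ 2 <= 1) -> q h ^+ 2 <= christoffel_darboux inner e d n mu F h.
Proof.
move=> uM [c [_ hc]] hq1.
pose cv : 'cV[R]_N := \col_i c (enum_val i).
have qlin : forall f, q f = lin cv f.
  move=> f; rewrite hc lin_sum.
  have -> : \sum_i cv i 0 * v f i 0 = \sum_(i < N) c (enum_val i) * monomial inner e (enum_val i) f.
    by apply: eq_bigr => i _; rewrite !mxE.
  have := @big_enum_val R 0 +%R (multi_index d n) {: multi_index d n} (fun a => c a * monomial inner e a f).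
  move=> ->; apply: eq_bigl => a; by [].
pose w := invmx Mx *m v h.
have Mw : Mx *m w = v h by rewrite /w mulKVmx.
have pE : christoffel_darboux inner e d n mu F h = B w w.
  by rewrite /christoffel_darboux /B -mulmxA -/w -{1}Mw trmx_mul Mx_sym.
have qE : q h = B cv w by rewrite qlin /lin /B -mulmxA Mw.
have Bc : B cv cv <= 1.
  have [I E] := quad cv cv; rewrite E.
  have mu1 : fine (mu F) <= 1.
    have h1 := probability_le1 mu mF.
    have h0 : (0 <= mu F)%E by exact: measure_ge0.
    by rewrite -lee_fin fineK // ge0_fin_numE // (le_lt_trans h1) // ltry.
  apply: (@le_trans _ _ (Rintegral mu F (fun=> 1))).
    apply: le_Rintegral => //; first exact: mF.
      apply: bounded_int mF _ _ _.
      - by apply: (le_lt_trans (probability_le1 mu mF)); exact: ltry.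
      - by apply: cont_measH; [exact: mF | exact: cst_continuous].
      - by exists 1 => x _; rewrite normr1.
    by move=> f Ff; rewrite -qlin -expr2; exact: hq1.
  by rewrite Rintegral_cst ?mul1r //; exact: mF.
have cs := @cs_quad R (B w w) (B cv w) (B cv cv) (B_psd w)
  (fun t => ltac:(rewrite -B_expand; exact: B_psd)).
rewrite qE pE; apply: (le_trans cs).
by rewrite -[X in _ <= X]mulr1 ler_wpM2l // B_psd.
Qed.
End Core.
Lemma numA (R : realType) (a : R) : 0 <= a < 1 -> 2 `^ a <= (1 + a) / (1 - a).
Proof.
move=> /andP[a0 a1].
have ln2 : ln (2 : R) <= 1.
  rewrite -ler_expR lnK ?posrE //; apply: le_trans (expR_ge1Dx 1); lra.
have h1 : 2 `^ a <= expR a.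
  rewrite /powR ifF; last by apply/negbTE; rewrite pnatr_eq0.
  by rewrite ler_expR -{2}[a]mulr1 ler_wpM2l.
have h2 : expR a <= (1 - a)^-1.
  have := expR_ge1Dx (- a); rewrite expRN => h.
  by rewrite -[expR a]invrK lef_pV2 ?posrE ?invr_gt0 ?expR_gt0 ?subr_gt0 //.
apply: (le_trans h1); apply: (le_trans h2).
have hp : 0 <= (1 - a)^-1 by rewrite invr_ge0 subr_ge0 ltW.
rewrite [X in _ <= X]mulrC -{1}[(1 - a)^-1]mulr1 ler_wpM2l //; lra.
Qed.

Lemma numB (R : realType) (a a' r : R) (d : nat) : 0 <= a' -> a' <= a -> a <= 1 ->
  2 `^ a <= r ->
  2 `^ (a' * d%:R - 3) <= r ^+ (2 * d./2) / 4.
Proof.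
move=> a'0 a'a a1 hr.
have a0 : 0 <= a by apply: le_trans a'a.
have hd : (d%:R : R) <= (2 * d./2)%:R + 1.
  have := odd_double_half d; rewrite -mul2n => hd.
  rewrite natr1 ler_nat; case: (odd d) hd => /= hd; lia.
apply: (@le_trans _ _ (2 `^ (a * (2 * d./2)%:R - 2))).
  apply: ler_powR; first lra.
  have : a' * d%:R <= a * d%:R by rewrite ler_wpM2r.
  have : a * d%:R <= a * ((2 * d./2)%:R + 1) by rewrite ler_wpM2l.
  lra.
rewrite powRD; last by rewrite pnatr_eq0 implybT.
rewrite powRrM powR_mulrn ?powR_ge0 //.
rewrite powR_invn // (_ : (2:R) ^+ 2 = 4); last by rewrite expr2; lra.
rewrite ler_wpM2r //.
apply: lerXn2r; rewrite ?nnegrE ?powR_ge0 //.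
by apply: le_trans hr; exact: powR_ge0.
Qed.
Section Geo.
Variables (R : realType) (H : normedModType R) (inner : H -> H -> R) (e : nat -> H).
Hypothesis hip : inner_product_of_norm inner.
Hypothesis he : forall i j, inner (e i) (e j) = (i == j)%:R.
Variables (n : nat) (F : set H) (h : H) (delta : R).
Local Notation P := (proj_n inner e n).

Lemma geo : compact F -> (exists f0, F f0) -> 0 < delta ->
  (forall f, F f -> delta <= `|P (f - h)|) ->
  exists m, [/\ delta <= m, 0 <= diam F & forall f, F f -> m <= `|P (f - h)| <= m + diam F].
Proof.
move=> cF [f0 Ff0] d0 hd.
have [M [_ hM]] := compact_bounded cF.
have bF : forall f, F f -> `|f| <= `|M| + 1.
  move=> f Ff; have := hM (`|M| + 1); apply => //.
  by rewrite (le_lt_trans (ler_norm M)) // ltrDl.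
have hsup : has_sup [set `|f1 - f2| | f1 in F & f2 in F].
  split; first by exists `|f0 - f0|; exists f0 => //; exists f0.
  exists ((`|M| + 1) + (`|M| + 1)) => _ [f1 F1 [f2 F2 <-]].
  by rewrite (le_trans (ler_normB _ _)) // lerD // bF.
have dub : forall f1 f2, F f1 -> F f2 -> `|f1 - f2| <= diam F.
  move=> f1 f2 F1 F2; apply: sup_upper_bound => //.
  by exists f1 => //; exists f2.
have D0 : 0 <= diam F by have := dub f0 f0 Ff0 Ff0; rewrite subrr normr0.
pose S := [set `|P (f - h)| | f in F].
have hinf : has_inf S.
  split; first by exists `|P (f0 - h)|; exists f0.
  by exists 0 => _ [f Ff <-].
have lbS : forall f, F f -> inf S <= `|P (f - h)|.
  by move=> f Ff; apply: ge_inf; [case: hinf | exists f].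
exists (inf S); split => //.
  by apply: lb_le_inf; [exists `|P (f0 - h)|; exists f0 | move=> _ [f Ff <-]; exact: hd].
move=> f Ff; rewrite lbS //=.
apply/ler_addgt0Pr => eps eps0.
have [_ [f' Ff' <-] hlt] := inf_adherent eps0 hinf.
have -> : P (f - h) = P (f - f') + P (f' - h) by rewrite !(projB e hip) addrA subrK.
apply: (le_trans (ler_normD _ _)).
have := proj_le hip he n (f - f'); have := dub f f' Ff Ff'.
move=> h1 h2; lra.
Qed.
End Geo.
Lemma g_inspan (R : realType) (H : normedModType R) (inner : H -> H -> R) (e : nat -> H) (d n : nat) (h : H) :
  (2 <= d)%N -> inspan inner e d n 2 (fun f => \sum_(i < n) (inner f (e i) - inner h (e i)) ^+ 2).
Proof.
move=> d2; apply: inspan_sum => i.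
have h1 : inspan inner e d n 1 (fun f => inner f (e i) - inner h (e i)).
  apply: inspanD; first by apply: inspan_coord; lia.
  exact: inspan_le (inspan_cst _ _ _ _ _) .
have d11 : (1 + 1 <= d)%N by lia.
have := inspanM d11 h1 h1.
by move=> hh; apply: inspan_ext hh _ => f; rewrite expr2.
Qed.

Theorem lemma5 (R : realType) (H : completeNormedModType R)
  (inner : H -> H -> R) (e : nat -> H)
  (F : set H) (mu : probability (borelH H) R) (d n : nat) :
  inner_product_of_norm inner ->
  complete_orthonormal_system inner e ->
  compact F ->
  mu (~` (F : set (borelH H))) = 0%E ->
  moment_matrix inner e d n mu F \in unitmx ->
  forall (h : H) (delta : R), 0 < delta ->
    (forall f, F f -> delta <= `|proj_n inner e n (f - h)|) ->
    2 `^ (delta / (delta + diam F) * d%:R - 3) <=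
      christoffel_darboux inner e d n mu F h.
Proof.
move=> hip [he _] cF hmu uM h delta d0 hmin.
set p := christoffel_darboux inner e d n mu F h.
have Fne : exists f0, F f0.
  case: (pselect (exists f0, F f0)) => // nF; exfalso.
  have FT : ~` (F : set (borelH H)) = setT.
    by apply/seteqP; split => x // _ Fx; apply: nF; exists x.
  by move: hmu; rewrite FT probability_setT => /eqP; rewrite eqe oner_eq0.
have [m [dm D0 hm]] := geo hip he cF Fne d0 hmin.
set D := diam F in D0 hm *.
have m0 : 0 < m by apply: lt_le_trans dm.
have p1 : 1 <= p.
  have i1 : inspan inner e d n d (fun _ => 1) by apply: inspan_le (inspan_cst _ _ _ _ _).
  have := @p_lower R H inner e hip d n F mu cF (fun _ => 1) h uM i1.
  by rewrite expr1n; apply => f _ /=.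
have a'0 : 0 <= delta / (delta + D) by rewrite divr_ge0 // ?addr_ge0 // ltW.
have a'1 : delta / (delta + D) <= 1.
  by rewrite ler_pdivrMr ?mul1r ?lerDl // ltr_wpDr.
have [d1|d2] := leqP d 1.
  apply: le_trans p1; rewrite -[X in _ <= X](powRr0 2).
  apply: (@ler_powR R 2); first lra.
  have : (d%:R : R) <= 1%:R by rewrite ler_nat.
  have : (0 : R) <= d%:R by [].
  nra.
have gE : forall f, \sum_(i < n) (inner f (e i) - inner h (e i)) ^+ 2 = `|proj_n inner e n (f - h)| ^+ 2.
  move=> f; rewrite (proj_normsq hip he); apply: eq_bigr => i _; by rewrite (innerBl hip).
set g := (fun f => \sum_(i < n) (inner f (e i) - inner h (e i)) ^+ 2).
have ginsp : inspan inner e d n 2 g by apply: g_inspan.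
have g0 : g h = 0 by rewrite /g big1 // => i _; rewrite subrr expr0n.
have gbd : forall f, F f -> m ^+ 2 <= g f <= (m + D) ^+ 2.
  move=> f Ff; rewrite /g gE; have /andP[h1 h2] := hm f Ff.
  rewrite !ler_sqr ?nnegrE ?h1 ?h2 ?addr_ge0 // ?(ltW m0) //.
have [D00|Dpos] := eqVneq D 0.
  exfalso.
  pose q := fun f => 1 + p * (1 + (- (m ^+ 2)^-1) * g f).
  have qi : inspan inner e d n d q.
    apply: inspan_le (_ : (2 <= d)%N) _; first by lia.
    apply: inspanD; first exact: inspan_le (inspan_cst _ _ _ _ _).
    apply: inspanZ; apply: inspanD; first exact: inspan_le (inspan_cst _ _ _ _ _).
    exact: inspanZ.
  have := @p_lower R H inner e hip d n F mu cF q h uM qi.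
  have hq : forall f, F f -> q f ^+ 2 <= 1.
    move=> f Ff; have := gbd f Ff; rewrite D00 addr0 => /andP[h1 h2].
    rewrite /q; have -> : g f = m ^+ 2 by apply/eqP; rewrite eq_le h1 h2.
    rewrite mulNr mulVf ?expf_neq0 ?gt_eqF // subrr mulr0 addr0 expr1n //.
  move=> /(_ hq); rewrite /q g0 mulr0 addr0 mulr1 -/p => hp.
  have : p < (1 + p) ^+ 2 by nra.
  by rewrite ltNge hp.
have Dp : 0 < D by rewrite lt_def Dpos D0.
set M := m + D.
have mM : m < M by rewrite /M ltrDl.
have M0 : 0 < M by apply: lt_trans mM.
set k := d./2.
have kd : (2 * k <= d)%N by have := odd_double_half d; rewrite -/k -mul2n; lia.
have den0 : 0 < M ^+ 2 - m ^+ 2 by rewrite subr_gt0 ltr_pXn2r // ?nnegrE ltW.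
pose phi := fun f => (M ^+ 2 + m ^+ 2) / (M ^+ 2 - m ^+ 2) + (- 2 / (M ^+ 2 - m ^+ 2)) * g f.
have phii : inspan inner e d n 2 phi.
  apply: inspanD; first exact: inspan_le (inspan_cst _ _ _ _ _).
  exact: inspanZ.
pose q := fun f => chebT k (phi f).
have qi : inspan inner e d n d q.
  exact: (inspan_le kd (inspan_cheb phii kd)).
have hq : forall f, F f -> q f ^+ 2 <= 1.
  move=> f Ff; apply: chebT_bound; have /andP[h1 h2] := gbd f Ff.
  rewrite /phi -/M in h2 *.
  have -> : (M ^+ 2 + m ^+ 2) / (M ^+ 2 - m ^+ 2) + - 2 / (M ^+ 2 - m ^+ 2) * g f
     = (M ^+ 2 + m ^+ 2 - 2 * g f) / (M ^+ 2 - m ^+ 2) by field; rewrite lt0r_neq0.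
  rewrite ler_pdivlMr // ler_pdivrMr //; apply/andP; split; lra.
have pq := @p_lower R H inner e hip d n F mu cF q h uM qi hq.
pose rho := (M + m) / (M - m).
pose sig := (M - m) / (M + m).
have Mm0 : M - m != 0 by rewrite subr_eq0 gt_eqF.
have Mp0 : M + m != 0 by rewrite gt_eqF // addr_gt0.
have rs : rho * sig = 1 by rewrite /rho /sig; field; rewrite Mm0 Mp0.
have phih : phi h = (rho + sig) / 2.
  rewrite /phi g0 mulr0 addr0 /rho /sig; field.
  have -> : M ^+ 2 - m ^+ 2 = (M - m) * (M + m) by ring.
  by rewrite Mm0 Mp0 mulf_neq0.
have qh : q h = (rho ^+ k + sig ^+ k) / 2 by rewrite /q phih chebT_closed.
have rho0 : 0 <= rho by apply: divr_ge0; lra.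
have sig0 : 0 <= sig by apply: divr_ge0; lra.
have qh2 : rho ^+ (2 * k) / 4 <= q h ^+ 2.
  rewrite qh mulnC exprM.
  have : 0 <= sig ^+ k by rewrite exprn_ge0.
  have : 0 <= rho ^+ k by rewrite exprn_ge0.
  move: (rho ^+ k) (sig ^+ k) => x y hx hy; nra.
apply: le_trans pq; apply: le_trans qh2.
apply: (numB (a := m / M)) => //.
- rewrite ler_pdivrMr ?addr_gt0 // mulrAC ler_pdivlMr // /M.
  have : delta * D <= m * D by rewrite ler_wpM2r // ltW.
  lra.
- by rewrite ler_pdivrMr // mul1r ltW.
- apply: (le_trans (numA _)); first by rewrite divr_ge0 ?ltW //= ltr_pdivrMr // mul1r.
  have -> : (1 + m / M) / (1 - m / M) = rho.
    by rewrite /rho; field; rewrite Mm0 gt_eqF.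
  by [].
Qed.
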